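(* For every formula $A$: $A$ is a theorem of the provability logic $\mathsf{GL}$ if and only if the one-element sequent $A$ is cut-free provable in the nested sequent calculus (rules (id), ($\land$), ($\lor$), ($\Box$), ($\Diamond$)).
   Context: $\mathsf{GL}$ is the normal modal logic obtained from $\mathsf{K}$ by adding the Löb axiom $\Box(\Box A\to A)\to\Box A$; a formula of the language below is read in $\mathsf{GL}$ by interpreting $\alpha^\perp$ as $\neg\alpha$ and $\Diamond$ as $\neg\Box\neg$. Fix a countable set of atoms; each atom $\alpha$ has a dual negative atom $\alpha^\perp$. Formulas: $A,B ::= \alpha \mid \alpha^\perp \mid A\land B \mid A\lor B \mid \Box A \mid \Diamond A$. Negation $A^\perp$ is defined by $(\alpha)^\perp=\alpha^\perp$, $(\alpha^\perp)^\perp=\alpha$, $(A\land B)^\perp=A^\perp\lor B^\perp$, $(A\lor B)^\perp=A^\perp\land B^\perp$, $(\Box A)^\perp=\Diamond A^\perp$, $(\Diamond A)^\perp=\Box A^\perp$. A (nested) sequent is given by $\Gamma,\Delta ::= \cdot \mid \Gamma, A \mid \Gamma, [\Delta]$, where $\cdot$ is the empty sequent; sequents are taken up to exchange (finite multisets of formulas and bracketed sequents), and $\Gamma,\Delta$ denotes juxtaposition. A unary context is given by $\Gamma\{-\} ::= \Delta,\{-\} \mid \Delta,[\Gamma\{-\}]$ (a sequent with exactly one hole); $\Gamma\{\Delta\}$ is the result of filling the hole with $\Delta$, and $\Gamma\{\}$ means $\Gamma\{\cdot\}$. Depth: $\mathrm{depth}(\Delta,\{-\})=0$, $\mathrm{depth}(\Delta,[\Gamma\{-\}])=\mathrm{depth}(\Gamma\{-\})+1$.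 Rules: (id) $\Gamma\{\alpha^\perp,\alpha\}$ with no premises ($\alpha$ an atom); ($\land$) from $\Gamma\{A\}$ and $\Gamma\{B\}$ infer $\Gamma\{A\land B\}$; ($\lor$) from $\Gamma\{A,B\}$ infer $\Gamma\{A\lor B\}$; ($\Box$) from $\Gamma\{[\Diamond A^\perp, A]\}$ infer $\Gamma\{\Box A\}$; ($\Diamond$) from $\Gamma\{\Delta\{A\},\Diamond A\}$ infer $\Gamma\{\Delta\{\},\Diamond A\}$, provided $\mathrm{depth}(\Delta\{-\})>0$; (cut) from $\Gamma\{A\}$ and $\Gamma\{A^\perp\}$ infer $\Gamma\{\}$. ''Cut-free provable'' means derivable using (id), ($\land$), ($\lor$), ($\Box$), ($\Diamond$) only. *)

(* Defs.v *)
From Stdlib Require Import List Permutation.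
Import ListNotations.

(* Atoms are natural numbers; [Pos a] is the atom a, [Neg a] its dual a^perp. *)
Inductive form : Type :=
| Pos : nat -> form
| Neg : nat -> form
| And : form -> form -> form
| Or  : form -> form -> form
| Box : form -> form
| Dia : form -> form.

Fixpoint neg (A : form) : form :=
  match A with
  | Pos a => Neg a
  | Neg a => Pos a
  | And A B => Or (neg A) (neg B)
  | Or A B => And (neg A) (neg B)
  | Box A => Dia (neg A)
  | Dia A => Box (neg A)
  end.

(* Full modal language used for the Hilbert-style presentation of GL. *)
Inductive mform : Type :=
| MVar : nat -> mform
| MBot : mform
| MImp : mform -> mform -> mform
| MAnd : mform -> mform -> mform
| MOr  : mform -> mform -> mform
| MBox : mform -> mform.

Definition MNeg (A : mform) : mform := MImp A MBot.
Definition MDia (A : mform) : mform := MNeg (MBox (MNeg A)).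

Fixpoint beval (f : mform -> bool) (A : mform) : bool :=
  match A with
  | MVar n => f (MVar n)
  | MBot => false
  | MImp A B => implb (beval f A) (beval f B)
  | MAnd A B => andb (beval f A) (beval f B)
  | MOr A B => orb (beval f A) (beval f B)
  | MBox A => f (MBox A)
  end.

(* Propositional tautologies (instances of classical tautologies). *)
Definition tautology (A : mform) : Prop := forall f, beval f A = true.

Inductive GLthm : mform -> Prop :=
| GL_taut : forall A, tautology A -> GLthm A
| GL_K : forall A B, GLthm (MImp (MBox (MImp A B)) (MImp (MBox A) (MBox B)))
| GL_Loeb : forall A, GLthm (MImp (MBox (MImp (MBox A) A)) (MBox A))
| GL_MP : forall A B, GLthm (MImp A B) -> GLthm A -> GLthm B
| GL_Nec : forall A, GLthm A -> GLthm (MBox A).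

Fixpoint tr (A : form) : mform :=
  match A with
  | Pos a => MVar a
  | Neg a => MNeg (MVar a)
  | And A B => MAnd (tr A) (tr B)
  | Or A B => MOr (tr A) (tr B)
  | Box A => MBox (tr A)
  | Dia A => MDia (tr A)
  end.

(* A sequent is a list of items (formulas and bracketed sequents); lists are
   taken up to exchange via the exchange rule below. *)
Inductive item : Type :=
| IF : form -> item
| IB : list item -> item.

Definition sequent := list item.

(* Unary contexts: Delta,{-}  |  Delta,[Gamma{-}] *)
Inductive ctx : Type :=
| Hole : sequent -> ctx
| Under : sequent -> ctx -> ctx.

Fixpoint fill (C : ctx) (G : sequent) : sequent :=
  match C with
  | Hole D => D ++ G
  | Under D C' => D ++ [IB (fill C' G)]
  end.

Fixpoint depth (C : ctx) : nat :=
  match C with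
  | Hole _ => 0
  | Under _ C' => S (depth C')
  end.

Inductive provable : sequent -> Prop :=
| r_exch : forall C S S', Permutation S S' ->
    provable (fill C S) -> provable (fill C S')
| r_id : forall C a, provable (fill C [IF (Neg a); IF (Pos a)])
| r_and : forall C A B, provable (fill C [IF A]) -> provable (fill C [IF B]) ->
    provable (fill C [IF (And A B)])
| r_or : forall C A B, provable (fill C [IF A; IF B]) ->
    provable (fill C [IF (Or A B)])
| r_box : forall C A, provable (fill C [IB [IF (Dia (neg A)); IF A]]) ->
    provable (fill C [IF (Box A)])
| r_dia : forall G D A, 0 < depth D ->
    provable (fill G (fill D [IF A] ++ [IF (Dia A)])) ->
    provable (fill G (fill D [] ++ [IF (Dia A)])).

(* Main.v *)
Require Import Defs.
From Stdlib Require Import List Permutation Arith Lia Bool Classical ClassicalEpsilon.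
Import ListNotations.

Fixpoint itr (i : item) : mform :=
  match i with
  | IF A => tr A
  | IB D => MBox (fold_right MOr MBot (map itr D))
  end.
Definition str (l : list item) : mform := fold_right MOr MBot (map itr l).
Lemma itr_IF A : itr (IF A) = tr A. Proof. reflexivity. Qed.
Lemma itr_IB D : itr (IB D) = MBox (str D). Proof. reflexivity. Qed.

Fixpoint bstr (f : mform -> bool) (l : list item) : bool :=
  match l with [] => false | i :: r => beval f (itr i) || bstr f r end.
Lemma beval_str f l : beval f (str l) = bstr f l.
Proof. induction l; simpl; auto. unfold str in IHl. rewrite IHl. reflexivity. Qed.
Lemma bstr_app f l1 l2 : bstr f (l1 ++ l2) = bstr f l1 || bstr f l2.
Proof. induction l1; simpl; auto. rewrite IHl1, orb_assoc. auto. Qed.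
Lemma bstr_perm f l1 l2 : Permutation l1 l2 -> bstr f l1 = bstr f l2.
Proof. induction 1; simpl; auto.
  - rewrite IHPermutation; auto.
  - rewrite !orb_assoc, (orb_comm (beval f (itr y))); auto.
  - congruence. Qed.

Ltac tsimp := repeat (rewrite ?beval_str, ?bstr_app, ?itr_IF, ?itr_IB in *; cbn [beval bstr tr neg MNeg MDia implb andb orb negb app] in *).
Ltac bdestr f := repeat match goal with
  | |- context [beval f ?X] => destruct (beval f X)
  | |- context [bstr f ?X] => destruct (bstr f X)
  | |- context [f ?X] => destruct (f X) end.
Ltac taut := try apply GL_taut; let f := fresh "f" in intro f; tsimp; bdestr f; reflexivity.

Lemma mp1 A B : GLthm A -> tautology (MImp A B) -> GLthm B.
Proof. intros. eapply GL_MP; [apply GL_taut; eauto| eauto]. Qed.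
Lemma mp2 A1 A2 B : GLthm A1 -> GLthm A2 -> tautology (MImp A1 (MImp A2 B)) -> GLthm B.
Proof. intros. eapply GL_MP; [|eauto]. eapply GL_MP; [apply GL_taut; eauto| eauto]. Qed.
Lemma box_mono P Q : GLthm (MImp P Q) -> GLthm (MImp (MBox P) (MBox Q)).
Proof. intro H. eapply GL_MP; [apply GL_K| apply GL_Nec; auto]. Qed.
Lemma box_mono2 P Q R : GLthm (MImp P (MImp Q R)) ->
  GLthm (MImp (MBox P) (MImp (MBox Q) (MBox R))).
Proof. intro H. pose proof (box_mono _ _ H) as H1.
  pose proof (GL_K Q R) as H2. eapply mp2; [exact H1|exact H2|]. taut. Qed.

Lemma four Y : GLthm (MImp (MBox Y) (MBox (MAnd Y (MBox Y)))).
Proof.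
  set (Z := MAnd Y (MBox Y)).
  assert (a : GLthm (MImp (MBox Z) (MBox Y))) by (apply box_mono; unfold Z; taut).
  assert (b : GLthm (MImp Y (MImp (MBox Z) Z))) by (eapply mp1; [exact a|]; unfold Z; taut).
  pose proof (box_mono _ _ b) as c. pose proof (GL_Loeb Z) as d.
  eapply mp2; [exact c|exact d|]. taut. Qed.

Lemma neg_equiv A : GLthm (MImp (tr (neg A)) (MNeg (tr A))) /\ GLthm (MImp (MNeg (tr A)) (tr (neg A))).
Proof.
  induction A; simpl.
  - split; taut.
  - split; taut.
  - destruct IHA1 as [a1 b1], IHA2 as [a2 b2]. split.
    + eapply mp2; [exact a1|exact a2|]. taut.
    + eapply mp2; [exact b1|exact b2|]. taut.
  - destruct IHA1 as [a1 b1], IHA2 as [a2 b2]. split.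
    + eapply mp2; [exact a1|exact a2|]. taut.
    + eapply mp2; [exact b1|exact b2|]. taut.
  - destruct IHA as [a b].
    assert (c : GLthm (MImp (MBox (tr A)) (MBox (MNeg (tr (neg A)))))).
    { apply box_mono. eapply mp1; [exact a|]. taut. }
    assert (d : GLthm (MImp (MBox (MNeg (tr (neg A)))) (MBox (tr A)))).
    { apply box_mono. eapply mp1; [exact b|]. taut. }
    split; [eapply mp1; [exact c|]|eapply mp1; [exact d|]]; taut.
  - destruct IHA as [a b].
    assert (c : GLthm (MImp (MBox (tr (neg A))) (MBox (MNeg (tr A))))) by (apply box_mono; auto).
    assert (d : GLthm (MImp (MBox (MNeg (tr A))) (MBox (tr (neg A))))) by (apply box_mono; auto).
    split; [eapply mp1; [exact c|]|eapply mp1; [exact d|]]; taut.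
Qed.

Lemma mono C X Y : GLthm (MImp (str X) (str Y)) ->
  GLthm (MImp (str (fill C X)) (str (fill C Y))).
Proof.
  induction C; simpl; intro H.
  - eapply mp1; [exact H|]. taut.
  - apply box_mono in IHC; auto. eapply mp1; [exact IHC|]. taut.
Qed.

Lemma mono2 C X Y Z : GLthm (MImp (str X) (MImp (str Y) (str Z))) ->
  GLthm (MImp (str (fill C X)) (MImp (str (fill C Y)) (str (fill C Z)))).
Proof.
  induction C; simpl; intro H.
  - eapply mp1; [exact H|]. taut.
  - apply box_mono2 in IHC; auto. eapply mp1; [exact IHC|]. taut.
Qed.

Lemma fill_thm C X : GLthm (str X) -> GLthm (str (fill C X)).
Proof.
  induction C; simpl; intro H.
  - eapply mp1; [exact H|]. taut.
  - apply GL_Nec in IHC; auto. eapply mp1; [exact IHC|]. taut.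
Qed.

Lemma Tlem A D : GLthm (MImp (MAnd (MNeg (tr A)) (MBox (MNeg (tr A))))
   (MImp (str (fill D [IF A])) (str (fill D [])))).
Proof.
  induction D; simpl.
  - taut.
  - apply box_mono2 in IHD. pose proof (four (MNeg (tr A))) as F.
    eapply mp2; [exact IHD|exact F|]. taut.
Qed.

Theorem soundness S : provable S -> GLthm (str S).
Proof.
  induction 1.
  - eapply GL_MP; [apply mono|exact IHprovable].
    apply GL_taut. intro f. tsimp. rewrite (bstr_perm f _ _ H). bdestr f; reflexivity.
  - apply fill_thm. taut.
  - eapply GL_MP; [eapply GL_MP; [apply mono2|exact IHprovable1]|exact IHprovable2]. taut.
  - eapply GL_MP; [apply mono|exact IHprovable]. taut.
  - eapply GL_MP; [apply mono|exact IHprovable].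
    destruct (neg_equiv A) as [a _].
    assert (c : GLthm (MImp (MBox (tr A)) (MBox (MNeg (tr (neg A)))))).
    { apply box_mono. eapply mp1; [exact a|]. taut. }
    assert (e : GLthm (MImp (str [IF (Dia (neg A)); IF A]) (MImp (MBox (tr A)) (tr A)))).
    { eapply mp1; [exact c|]. taut. }
    apply box_mono in e. pose proof (GL_Loeb (tr A)) as l.
    eapply mp2; [exact e|exact l|]. taut.
  - eapply GL_MP; [apply mono|exact IHprovable].
    destruct D as [E|E D']; simpl in H; [lia|]. simpl.
    pose proof (Tlem A D') as T. apply box_mono2 in T.
    pose proof (four (MNeg (tr A))) as F.
    eapply mp2; [exact T|exact F|]. taut.
Qed.

Theorem sound1 A : provable [IF A] -> GLthm (tr A).
Proof. intro H. apply soundness in H. eapply mp1; [exact H|]. taut. Qed.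

Inductive Rsub : sequent -> sequent -> Prop :=
| Rs1 w v : In (IB v) w -> Rsub w v
| Rs2 w u v : In (IB u) w -> Rsub u v -> Rsub w v.

Fixpoint isz (i : item) : nat :=
  match i with IF _ => 1 | IB l => S (list_sum (map isz l)) end.
Definition lsz (l : sequent) := list_sum (map isz l).

Lemma in_lsz i l : In i l -> isz i <= lsz l.
Proof. induction l; simpl; intros H; [contradiction|]. unfold lsz in *; simpl.
  destruct H as [H|H]; [subst; lia|]. specialize (IHl H). lia. Qed.

Lemma Rsub_lt w v : Rsub w v -> lsz v < lsz w.
Proof. induction 1.
  - apply in_lsz in H. simpl in H. unfold lsz in *. lia.
  - apply in_lsz in H. simpl in H. unfold lsz in *. lia. Qed.

Lemma Rsub_trans w u v : Rsub w u -> Rsub u v -> Rsub w v.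
Proof. induction 1; intros; [eapply Rs2; eauto| eapply Rs2; eauto]. Qed.

Fixpoint msat (w : sequent) (A : mform) : Prop :=
  match A with
  | MVar n => In (IF (Neg n)) w
  | MBot => False
  | MImp A B => msat w A -> msat w B
  | MAnd A B => msat w A /\ msat w B
  | MOr A B => msat w A \/ msat w B
  | MBox A => forall v, Rsub w v -> msat v A
  end.

Definition dec (P : Prop) : bool := if excluded_middle_informative P then true else false.
Lemma dec_true P : dec P = true <-> P.
Proof. unfold dec; destruct (excluded_middle_informative P); split; intros; auto; discriminate || contradiction. Qed.
Lemma dec_false P : dec P = false <-> ~ P.
Proof. unfold dec; destruct (excluded_middle_informative P); split; intros; auto; discriminate || contradiction. Qed.

Lemma taut_sat w A : tautology A -> msat w A.
Proof.
  intro T. set (f := fun X => dec (msat w X)).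
  assert (E : forall B, beval f B = true <-> msat w B).
  { induction B; simpl.
    - unfold f; apply dec_true.
    - split; [discriminate|tauto].
    - destruct (beval f B1), (beval f B2); simpl; intuition; discriminate.
    - destruct (beval f B1), (beval f B2); simpl; intuition; discriminate.
    - destruct (beval f B1), (beval f B2); simpl; intuition; discriminate.
    - unfold f; apply dec_true. }
  apply E, T.
Qed.

Theorem GL_sound A : GLthm A -> forall w, msat w A.
Proof.
  induction 1; intros w.
  - apply taut_sat; auto.
  - simpl. intros H1 H2 v Hv. apply H1; auto.
  - simpl. intros H v Hv.
    remember (lsz v) as n. revert v Heqn Hv.
    induction n as [n IH] using (well_founded_induction lt_wf).
    intros v Hn Hv. apply H; auto. intros x Hx.
    eapply (IH (lsz x)); [|reflexivity|eapply Rsub_trans; eauto].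
    subst. apply Rsub_lt; auto.
  - simpl in IHGLthm1. apply IHGLthm1, IHGLthm2.
  - simpl. intros. apply IHGLthm.
Qed.

Fixpoint covered (A : form) (n : sequent) : Prop :=
  In (IF A) n \/
  match A with
  | And B C => covered B n \/ covered C n
  | Or B C => covered B n /\ covered C n
  | Box B => exists D, In (IB D) n /\ covered B D
  | _ => False
  end.

Definition dias (l : sequent) : list form :=
  flat_map (fun i => match i with IF (Dia B) => [B] | _ => [] end) l.

Lemma in_dias A l : In (IF (Dia A)) l -> In A (dias l).
Proof. intro H. unfold dias. apply in_flat_map. exists (IF (Dia A)). simpl; auto. Qed.

Inductive Sat : list form -> sequent -> Prop :=
| mkSat H n :
    (forall X, In X H -> covered X n) ->
    (forall p, In (IF (Pos p)) n -> In (IF (Neg p)) n -> False) ->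
    (forall A B, In (IF (And A B)) n -> covered A n \/ covered B n) ->
    (forall A B, In (IF (Or A B)) n -> covered A n /\ covered B n) ->
    (forall B, In (IF (Box B)) n -> exists D, In (IB D) n /\ covered B D) ->
    (forall D, In (IB D) n -> Sat (H ++ dias n) D) ->
    Sat H n.

Lemma Sat_desc w v : Rsub w v -> forall H, Sat H w -> exists H', Sat H' v /\ incl (H ++ dias w) H'.
Proof.
  induction 1 as [w v Hin|w u v Hin Hr IH]; intros H HS; inversion HS as [? ? _ _ _ _ _ Hch]; subst.
  - exists (H ++ dias w); split; auto. apply incl_refl.
  - destruct (IH _ (Hch _ Hin)) as [H' [S1 S2]]. exists H'; split; auto.
    intros x Hx. apply S2. apply in_or_app; auto.
Qed.

Lemma truth A : forall H w, Sat H w -> covered A w -> ~ msat w (tr A).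
Proof.
  induction A; intros H w HS Hc; inversion HS as [? ? Hcov Hcl HAnd HOr HBox Hch]; subst;
    cbn [covered tr msat MDia MNeg] in *.
  - destruct Hc as [Hc|[]]. intro. eapply Hcl; eauto.
  - destruct Hc as [Hc|[]]. tauto.
  - destruct Hc as [Hc|Hc]; [apply HAnd in Hc|];
      (intros [h1 h2]; destruct Hc as [Hc|Hc]; [eapply IHA1|eapply IHA2]; eauto).
  - destruct Hc as [Hc|Hc]; [apply HOr in Hc|];
      (intros [h1|h2]; destruct Hc as [Hc1 Hc2]; [eapply IHA1|eapply IHA2]; eauto).
  - assert (Hc' : exists D, In (IB D) w /\ covered A D) by (destruct Hc as [Hc|Hc]; [apply HBox in Hc|]; auto).
    destruct Hc' as [D [HD HcD]]. intro Hb.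
    apply (IHA _ _ (Hch _ HD) HcD). apply Hb. constructor; auto.
  - destruct Hc as [Hc|[]]. intro Hd. apply Hd. intros v Hv Hs.
    destruct (Sat_desc _ _ Hv _ HS) as [H' [S1 S2]].
    eapply IHA; [exact S1| |exact Hs].
    inversion S1 as [? ? Hcv _ _ _ _ _]; subst. apply Hcv. apply S2. apply in_or_app; right. apply in_dias; auto.
Qed.

Inductive FA : sequent -> sequent -> Prop :=
| mkFA w S : (forall A, In (IF A) S -> ~ msat w (tr A)) ->
             (forall D, In (IB D) S -> exists v, Rsub w v /\ FA v D) -> FA w S.

Lemma covered_in A n : In (IF A) n -> covered A n.
Proof. destruct A; simpl; auto. Qed.

Lemma Sat_FA H n : Sat H n -> FA n n.
Proof.
  induction 1. constructor.
  - intros A HA. eapply truth; [econstructor; eauto| apply covered_in; auto].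
  - intros D HD. exists D. split; [constructor; auto| apply H6; auto].
Qed.

Lemma FA_lift S S' : (forall A, In (IF A) S -> In (IF A) S') ->
  (forall D, In (IB D) S -> exists D', In (IB D') S' /\ forall u, FA u D' -> FA u D) ->
  forall w, FA w S' -> FA w S.
Proof.
  intros H1 H2 w HF. inversion HF; subst. constructor.
  - intros A HA. apply H; auto.
  - intros D HD. destruct (H2 _ HD) as [D' [HD' T]]. destruct (H0 _ HD') as [v [Hv Hf]].
    exists v; split; auto.
Qed.

Lemma cov_lift n n' : (forall Y, In (IF Y) n -> covered Y n') ->
  (forall D, In (IB D) n -> exists D', In (IB D') n' /\ forall Z, covered Z D -> covered Z D') ->
  forall X, covered X n -> covered X n'.
Proof.
  intros H1 H2 X. induction X; intros Hc; simpl in Hc; destruct Hc as [Hc|Hc];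
    try (exact (H1 _ Hc)); try contradiction; simpl.
  - right. destruct Hc; [left; apply IHX1|right; apply IHX2]; auto.
  - right. destruct Hc; split; auto.
  - destruct Hc as [D [HD HcD]]. destruct (H2 _ HD) as [D' [HD' T]]. right. exists D'; auto.
Qed.


Lemma perm_app_mid {T} (L A B1 B2 : list T) : Permutation A (B1 ++ B2) -> Permutation (L ++ A) (B1 ++ L ++ B2).
Proof. intro H. rewrite app_assoc. eapply perm_trans; [|apply Permutation_app_tail, Permutation_app_comm].
  rewrite <- app_assoc. apply Permutation_app_head; auto. Qed.
Lemma perm_var {T} (L B : list T) : Permutation (L ++ []) B -> Permutation L B.
Proof. rewrite app_nil_r; auto. Qed.
Lemma eq_perm {T} (l l' : list T) : l = l' -> Permutation l l'.
Proof. intros ->; auto. Qed.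

Ltac find_elt T x B k :=
  lazymatch B with
  | x :: ?R => k (@nil T) R
  | ?y :: ?R => find_elt T x R ltac:(fun B1 B2 => k (y :: B1) B2)
  | ?M ++ ?R => find_elt T x R ltac:(fun B1 B2 => k (M ++ B1) B2)
  end.
Ltac find_sub T L B k :=
  lazymatch B with
  | L ++ ?R => k (@nil T) R
  | L => k (@nil T) (@nil T)
  | ?y :: ?R => find_sub T L R ltac:(fun B1 B2 => k (y :: B1) B2)
  | ?M ++ ?R => find_sub T L R ltac:(fun B1 B2 => k (M ++ B1) B2)
  end.
Ltac pnorm := repeat (rewrite <- app_assoc || rewrite <- app_comm_cons || rewrite app_nil_l || rewrite app_nil_r).
Ltac eqfin := apply eq_perm; pnorm; reflexivity.
Ltac psolve :=
  pnorm;
  lazymatch goal with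
  | |- Permutation [] _ => apply eq_perm; reflexivity
  | |- @Permutation ?T (?x :: ?A) ?B =>
      find_elt T x B ltac:(fun B1 B2 =>
        apply (@perm_trans _ _ (B1 ++ x :: B2)); [apply Permutation_cons_app; psolve| eqfin])
  | |- @Permutation ?T (?L ++ ?A) ?B =>
      find_sub T L B ltac:(fun B1 B2 =>
        apply (@perm_trans _ _ (B1 ++ L ++ B2)); [apply perm_app_mid; psolve| eqfin])
  | |- @Permutation ?T ?L ?B =>
      find_sub T L B ltac:(fun B1 B2 =>
        apply (@perm_trans _ _ (B1 ++ L ++ B2)); [apply perm_var; apply perm_app_mid; psolve| eqfin])
  end.


Definition prep (D : sequent) (C : ctx) : ctx :=
  match C with Hole E => Hole (D ++ E) | Under E C' => Under (D ++ E) C' end.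
Fixpoint cplug (C C2 : ctx) : ctx :=
  match C with Hole D => prep D C2 | Under D C' => Under D (cplug C' C2) end.
Lemma fill_prep D C X : fill (prep D C) X = D ++ fill C X.
Proof. destruct C; simpl; rewrite app_assoc; auto. Qed.
Lemma fill_cplug C C2 X : fill (cplug C C2) X = fill C (fill C2 X).
Proof. induction C; simpl. apply fill_prep. rewrite IHC; auto. Qed.

Lemma exch C S S' : Permutation S S' -> provable (fill C S') -> provable (fill C S).
Proof. intros P H. eapply r_exch; [apply Permutation_sym; exact P| exact H]. Qed.

(* apply a rule at the end of a node *)
Lemma at_end C L X : fill C (L ++ X) = fill (cplug C (Hole L)) X.
Proof. rewrite fill_cplug. reflexivity. Qed.
Lemma in_br C L X : fill C (L ++ [IB X]) = fill (cplug C (Under L (Hole []))) X.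
Proof. rewrite fill_cplug. reflexivity. Qed.

Lemma neg_inv A : neg (neg A) = A.
Proof. induction A; simpl; congruence. Qed.

Lemma own_dia C L X D : In (IF (Dia X)) L ->
  provable (fill C (L ++ [IB (fill D [IF X])])) -> provable (fill C (L ++ [IB (fill D [])])).
Proof.
  intros Hin Hp. apply in_split in Hin as [L1 [L2 ->]].
  assert (P : forall Y, Permutation ((L1 ++ IF (Dia X) :: L2) ++ [IB Y])
                        (fill (Under (L1 ++ L2) (Hole [])) Y ++ [IF (Dia X)])).
  { intro Y. simpl. psolve. }
  eapply exch; [apply (P (fill D []))|].
  change (fill (Under (L1 ++ L2) (Hole [])) (fill D [])) with (fill (Under (L1 ++ L2) D) []).
  apply r_dia; [simpl; lia|].
  change (fill (Under (L1 ++ L2) D) [IF X]) with (fill (Under (L1 ++ L2) (Hole [])) (fill D [IF X])).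
  eapply exch; [apply Permutation_sym, P|exact Hp].
Qed.

Lemma gen_id B : forall C, provable (fill C [IF B; IF (neg B)]).
Proof.
  induction B; intro C; simpl.
  - eapply exch; [apply perm_swap|]. apply r_id.
  - apply r_id.
  - eapply exch with (S' := [IF (Or (neg B1) (neg B2))] ++ [IF (And B1 B2)]); [psolve|].
    rewrite at_end. apply r_and; rewrite <- at_end.
    + eapply exch with (S' := [IF B1] ++ [IF (Or (neg B1) (neg B2))]); [psolve|].
      rewrite at_end. apply r_or. rewrite <- at_end.
      eapply exch with (S' := [IF (neg B2)] ++ [IF B1; IF (neg B1)]); [psolve|].
      rewrite at_end. apply IHB1.
    + eapply exch with (S' := [IF B2] ++ [IF (Or (neg B1) (neg B2))]); [psolve|].
      rewrite at_end. apply r_or. rewrite <- at_end.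
      eapply exch with (S' := [IF (neg B1)] ++ [IF B2; IF (neg B2)]); [psolve|].
      rewrite at_end. apply IHB2.
  - change [IF (Or B1 B2); IF (And (neg B1) (neg B2))] with ([IF (Or B1 B2)] ++ [IF (And (neg B1) (neg B2))]).
    rewrite at_end. apply r_and; rewrite <- at_end.
    + eapply exch with (S' := [IF (neg B1)] ++ [IF (Or B1 B2)]); [psolve|].
      rewrite at_end. apply r_or. rewrite <- at_end.
      eapply exch with (S' := [IF B2] ++ [IF B1; IF (neg B1)]); [psolve|].
      rewrite at_end. apply IHB1.
    + eapply exch with (S' := [IF (neg B2)] ++ [IF (Or B1 B2)]); [psolve|].
      rewrite at_end. apply r_or. rewrite <- at_end.
      eapply exch with (S' := [IF B1] ++ [IF B2; IF (neg B2)]); [psolve|].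
      rewrite at_end. apply IHB2.
  - eapply exch with (S' := [IF (Dia (neg B))] ++ [IF (Box B)]); [psolve|].
    rewrite at_end. apply r_box. rewrite <- at_end.
    apply (own_dia C [IF (Dia (neg B))] (neg B) (Hole [IF (Dia (neg B)); IF B])); [simpl; auto|].
    rewrite in_br. simpl.
    change [IF (Dia (neg B)); IF B; IF (neg B)] with ([IF (Dia (neg B))] ++ [IF B; IF (neg B)]).
    rewrite at_end. apply IHB.
  - change [IF (Dia B); IF (Box (neg B))] with ([IF (Dia B)] ++ [IF (Box (neg B))]).
    rewrite at_end. apply r_box. rewrite <- at_end. rewrite neg_inv.
    apply (own_dia C [IF (Dia B)] B (Hole [IF (Dia B); IF (neg B)])); [simpl; auto|].
    rewrite in_br. simpl.
    eapply exch with (S' := [IF (Dia B)] ++ [IF B; IF (neg B)]); [psolve|].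
    rewrite at_end. apply IHB.
Qed.

Definition Pdel C X := forall D, provable (fill C (fill D [IF X])) -> provable (fill C (fill D [])).
Definition FAF w F := forall A, In A F -> ~ msat w (tr A).
Definition leaf B : sequent := [IF (Dia (neg B)); IF B].
Fixpoint nonbox (F : list form) : list form :=
  match F with [] => [] | Box _ :: r => nonbox r | a :: r => a :: nonbox r end.
Fixpoint boxesOf (F : list form) : list form :=
  match F with [] => [] | Box B :: r => B :: boxesOf r | _ :: r => boxesOf r end.
Definition diasF (F : list form) : list form := dias (map IF F).
Definition covF F A := covered A (map IF F).

Lemma inIF A F : In (IF A) (map IF F) <-> In A F.
Proof. rewrite in_map_iff. split; [intros [x [E H]]; inversion E; subst; auto| intros; exists A; auto]. Qed.
Lemma noIB D F : ~ In (IB D) (map IF F).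
Proof. rewrite in_map_iff. intros [x [E _]]; discriminate. Qed.
Lemma inIF_app A F Ds : In (IF A) (map IF F ++ map IB Ds) <-> In A F.
Proof. split.
  - intro h. apply in_app_or in h as [h|h]; [apply inIF; auto|].
    apply in_map_iff in h as [x [E h]]. discriminate.
  - intros; apply in_or_app; left; apply inIF; auto. Qed.
Lemma inIB_app D F Ds : In (IB D) (map IF F ++ map IB Ds) <-> In D Ds.
Proof. split.
  - intro h. apply in_app_or in h as [h|h]; [apply noIB in h; contradiction|].
    apply in_map_iff in h as [x [E h]]. inversion E; subst; auto.
  - intros; apply in_or_app; right; apply in_map_iff; exists D; auto. Qed.
Lemma in_nonbox A F : In A (nonbox F) <-> In A F /\ forall B, A <> Box B.
Proof. induction F as [|a F IH]; simpl; [tauto|].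
  destruct a; simpl; rewrite IH.
  5: { split; [intros [h1 h2]; split; auto| intros [[h|h] h2]; [subst; exfalso; eapply h2; eauto| auto]]. }
  all: split; [intros [h|[h1 h2]]; [subst; split; [left; auto| intros B' E; discriminate]| split; auto]
              | intros [[h|h] h2]; [left; auto| right; auto]].
Qed.
Lemma in_boxesOf B F : In B (boxesOf F) <-> In (Box B) F.
Proof. induction F as [|a F IH]; simpl; [tauto|].
  destruct a; simpl; rewrite IH; split; intuition (try discriminate; try congruence). Qed.
Lemma dias_app l1 l2 : dias (l1 ++ l2) = dias l1 ++ dias l2.
Proof. unfold dias. apply flat_map_app. Qed.
Lemma dias_IB Ds : dias (map IB Ds) = [].
Proof. induction Ds; simpl; auto. Qed.
Lemma diasF_in X F : In X (diasF F) <-> In (Dia X) F.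
Proof. unfold diasF, dias. rewrite in_flat_map. split.
  - intros [i [Hi Hx]]. apply in_map_iff in Hi as [a [<- Ha]].
    destruct a; simpl in Hx; try contradiction. destruct Hx as [<-|[]]; auto.
  - intro H. exists (IF (Dia X)). split; [apply inIF; auto| simpl; auto]. Qed.

Lemma blocked C F B : In (Box B) F -> (Pdel C (neg B) \/ In (Dia (neg B)) F) ->
  provable (fill C (map IF F)).
Proof.
  intros Hin Hb. pose proof Hin as Hin0. apply in_split in Hin as [F1 [F2 ->]].
  eapply exch with (S' := map IF (F1 ++ F2) ++ [IF (Box B)]); [rewrite !map_app; simpl; psolve|].
  rewrite at_end. apply r_box. rewrite <- at_end.
  destruct Hb as [Hp|Hd].
  - apply (Hp (Under (map IF (F1 ++ F2)) (Hole [IF (Dia (neg B)); IF B]))).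
    cbn [fill app]. rewrite in_br. cbn [fill app].
    change [IF (Dia (neg B)); IF B; IF (neg B)] with ([IF (Dia (neg B))] ++ [IF B; IF (neg B)]).
    rewrite at_end. apply gen_id.
  - apply (own_dia C (map IF (F1 ++ F2)) (neg B) (Hole [IF (Dia (neg B)); IF B])).
    + apply inIF. apply in_app_or in Hd as [h|[h|h]]; [| discriminate|]; apply in_or_app; auto.
    + cbn [fill app]. rewrite in_br. cbn [fill app].
      change [IF (Dia (neg B)); IF B; IF (neg B)] with ([IF (Dia (neg B))] ++ [IF B; IF (neg B)]).
      rewrite at_end. apply gen_id.
Qed.

Definition cnt (P : form -> Prop) (l : list form) : nat := length (filter (fun x => dec (P x)) l).
Lemma cnt_le P l : cnt P l <= length l.
Proof. unfold cnt. induction l; simpl; auto. destruct (dec (P a)); simpl; lia. Qed.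
Lemma cnt_mono P Q l : (forall x, P x -> Q x) -> cnt P l <= cnt Q l.
Proof. intro H. unfold cnt. induction l; simpl; auto.
  destruct (dec (P a)) eqn:E1, (dec (Q a)) eqn:E2; simpl; try lia.
  apply (proj1 (dec_true _)) in E1. apply (proj1 (dec_false _)) in E2. exfalso; auto. Qed.
Lemma cnt_strict P Q l a : (forall x, P x -> Q x) -> In a l -> Q a -> ~ P a -> cnt P l < cnt Q l.
Proof. intros H Ha Qa Pa. unfold cnt. induction l as [|b l IHl]; simpl in *; [contradiction|].
  pose proof (cnt_mono P Q l H) as M. unfold cnt in M.
  destruct Ha as [<-|Ha].
  - assert (E1 : dec (P b) = false) by (apply dec_false; auto).
    assert (E2 : dec (Q b) = true) by (apply dec_true; auto).
    rewrite E1, E2. simpl. lia.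
  - specialize (IHl Ha). destruct (dec (P b)) eqn:E1, (dec (Q b)) eqn:E2; simpl; try lia.
    apply (proj1 (dec_true _)) in E1. apply (proj1 (dec_false _)) in E2. exfalso; auto. Qed.

Definition clos (U : list form) (A : form) : Prop :=
  match A with
  | And B C | Or B C => In B U /\ In C U
  | Box B => In B U /\ In (Dia (neg B)) U
  | Dia B => In B U
  | _ => True
  end.
Definition Closed U := forall A, In A U -> clos U A.

Lemma FA_flat w F : FA w (map IF F) <-> FAF w F.
Proof. split.
  - intros H A HA. inversion H; subst. apply H0. apply inIF; auto.
  - intro H. constructor. intros A HA. apply H, inIF; auto. intros D HD. apply noIB in HD; contradiction. Qed.

Lemma Forall2_r {X Y} (R : X -> Y -> Prop) l1 l2 y : Forall2 R l1 l2 -> In y l2 -> exists x, In x l1 /\ R x y.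
Proof. induction 1; simpl; [tauto|]. intros [<-|h]; [exists x; auto|]. destruct (IHForall2 h) as [z [? ?]]; exists z; auto. Qed.
Lemma Forall2_l {X Y} (R : X -> Y -> Prop) l1 l2 x : Forall2 R l1 l2 -> In x l1 -> exists y, In y l2 /\ R x y.
Proof. induction 1; simpl; [tauto|]. intros [<-|h]; [exists y; auto|]. destruct (IHForall2 h) as [z [? ?]]; exists z; auto. Qed.

Lemma p1b_prov C F : forall E, provable (fill C (E ++ map IF (nonbox F) ++ map IB (map leaf (boxesOf F)))) ->
  provable (fill C (E ++ map IF F)).
Proof.
  induction F as [|a F IH]; intros E Hp; simpl in *; auto.
  destruct a as [p|p|A1 A2|A1 A2|b|b]; simpl in *.
  5: { eapply exch with (S' := (E ++ map IF F) ++ [IF (Box b)]); [psolve|].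
  rewrite at_end. apply r_box. rewrite <- at_end.
  eapply exch with (S' := (E ++ [IB (leaf b)]) ++ map IF F); [unfold leaf; psolve|].
  apply IH. eapply exch; [|exact Hp]. unfold leaf. psolve. }
  all: match goal with |- provable (fill _ (?E0 ++ ?i :: ?L0)) =>
    replace (E0 ++ i :: L0) with ((E0 ++ [i]) ++ L0) by (rewrite <- app_assoc; reflexivity) end;
    apply IH; rewrite <- app_assoc; exact Hp.
Qed.

Section Search.
Variable U : list form.
Hypothesis CU : Closed U.

Definition Done1 H F1 :=
  (forall X, In X H -> covF F1 X) /\
  (forall p, In (Pos p) F1 -> In (Neg p) F1 -> False) /\
  (forall A B, In (And A B) F1 -> covF F1 A \/ covF F1 B) /\
  (forall A B, In (Or A B) F1 -> covF F1 A /\ covF F1 B).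

Definition Res1 C H F F1 :=
  ~ provable (fill C (map IF F1)) /\ incl F1 U /\ (forall w, FAF w F1 -> FAF w F) /\
  (forall X, covF F X -> covF F1 X) /\ (forall X, In (Dia X) F -> In (Dia X) F1) /\ Done1 H F1.

Lemma covF_lift F F' : (forall Y, In Y F -> covF F' Y) -> forall X, covF F X -> covF F' X.
Proof. intros H X. apply cov_lift.
  - intros Y HY. apply H, inIF; auto.
  - intros D HD. apply noIB in HD; contradiction. Qed.

Lemma repl_facts F F1 F2 Y R : F = F1 ++ Y :: F2 ->
  ((forall w, FAF w R -> ~ msat w (tr Y)) -> forall w, FAF w (F1 ++ F2 ++ R) -> FAF w F) /\
  (covF (F1 ++ F2 ++ R) Y -> forall X, covF F X -> covF (F1 ++ F2 ++ R) X) /\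
  ((forall X, Y <> Dia X) -> forall X, In (Dia X) F -> In (Dia X) (F1 ++ F2 ++ R)) /\
  (incl R U -> incl F U -> incl (F1 ++ F2 ++ R) U).
Proof.
  intros ->. split; [|split; [|split]].
  - intros HR w Hw A HA. apply in_app_or in HA as [HA|[<-|HA]].
    + apply Hw; apply in_or_app; auto.
    + apply HR. intros Z HZ. apply Hw. apply in_or_app; right; apply in_or_app; auto.
    + apply Hw; apply in_or_app; right; apply in_or_app; auto.
  - intros HY. apply covF_lift. intros Z HZ. apply in_app_or in HZ as [HZ|[<-|HZ]]; auto;
      apply covered_in, inIF; apply in_or_app; [left| right; apply in_or_app; left]; auto.
  - intros Hn X HX. apply in_app_or in HX as [HX|[HX|HX]]; [apply in_or_app; auto| exfalso; eapply Hn; eauto|].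
    apply in_or_app; right; apply in_or_app; auto.
  - intros HR HF Z HZ. apply in_app_or in HZ as [HZ|HZ]; [apply HF, in_or_app; auto|].
    apply in_app_or in HZ as [HZ|HZ]; [apply HF, in_or_app; right; right; auto| apply HR; auto].
Qed.

Lemma phase1a : forall m F H C, length U - cnt (covF F) U = m -> incl F U -> incl H U ->
  (forall X, In X H -> Pdel C X) -> ~ provable (fill C (map IF F)) -> exists F1, Res1 C H F F1.
Proof.
  intro m; induction m as [m IH] using (well_founded_induction lt_wf);
    intros F H C Hm HFU HHU HP Hnp.
  assert (STEP : forall F', ~ provable (fill C (map IF F')) -> incl F' U ->
     (forall w, FAF w F' -> FAF w F) -> (forall X, covF F X -> covF F' X) ->
     (exists a, In a U /\ covF F' a /\ ~ covF F a) -> (forall X, In (Dia X) F -> In (Dia X) F') ->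
     exists F1, Res1 C H F F1).
  { intros F' h1 h2 h3 h4 [a [ha1 [ha2 ha3]]] h5.
    assert (Hlt : cnt (covF F) U < cnt (covF F') U) by (eapply cnt_strict; eauto).
    pose proof (cnt_le (covF F') U).
    destruct (IH (length U - cnt (covF F') U) ltac:(lia) F' H C eq_refl h2 HHU HP h1)
      as [F1 [g1 [g2 [g3 [g4 [g5 g6]]]]]].
    exists F1. split; [auto|split; [auto|split; [|split; [|split; [|auto]]]]].
    - intros w Hw. apply h3, g3, Hw.
    - intros X HX. apply g4, h4, HX.
    - intros X HX. apply g5, h5, HX. }
  destruct (classic (exists X, In X H /\ ~ covF F X)) as [[X [HX1 HX2]]|N1].
  { apply (STEP (F ++ [X])).
    - intro Hp. apply Hnp. specialize (HP X HX1 (Hole (map IF F))). simpl in HP.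
      rewrite app_nil_r in HP. apply HP. rewrite map_app in Hp. exact Hp.
    - intros Z HZ. apply in_app_or in HZ as [HZ|[<-|[]]]; auto.
    - intros w h A hA. apply h, in_or_app; auto.
    - apply covF_lift. intros Y HY. apply covered_in, inIF, in_or_app; auto.
    - exists X. split; auto. split; auto. apply covered_in, inIF, in_or_app; simpl; auto.
    - intros Y HY. apply in_or_app; auto. }
  destruct (classic (exists A B, In (And A B) F /\ ~ covF F A /\ ~ covF F B)) as [[A [B [Hin [nA nB]]]]|N2].
  { pose proof Hin as Hin'. apply in_split in Hin' as [F1 [F2 EF]].
    pose proof (HFU _ Hin) as HU. apply CU in HU. destruct HU as [HUA HUB].
    assert (Hor : ~ provable (fill C (map IF (F1 ++ F2 ++ [A]))) \/ ~ provable (fill C (map IF (F1 ++ F2 ++ [B])))).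
    { apply not_and_or. intros [p1 p2]. apply Hnp. rewrite EF.
      eapply exch with (S' := map IF (F1 ++ F2) ++ [IF (And A B)]); [rewrite !map_app; simpl; psolve|].
      rewrite at_end; apply r_and; rewrite <- at_end;
        [eapply exch; [|exact p1]| eapply exch; [|exact p2]]; rewrite !map_app; simpl; psolve. }
    destruct Hor as [h|h]; apply (STEP _ h).
    - apply (repl_facts _ _ _ _ _ EF); auto. intros Z HZ. destruct HZ as [<-|[]]; auto.
    - apply (repl_facts _ _ _ _ _ EF). intros w Hw. simpl. intros [s _]. apply (Hw A); simpl; auto.
    - apply (repl_facts _ _ _ _ _ EF). unfold covF; simpl; right; left. apply covered_in, inIF.
      apply in_or_app; right; apply in_or_app; simpl; auto.
    - exists A. repeat split; auto. apply covered_in, inIF. apply in_or_app; right; apply in_or_app; simpl; auto.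
    - apply (repl_facts _ _ _ _ _ EF). intros X E; discriminate.
    - apply (repl_facts _ _ _ _ _ EF); auto. intros Z HZ. destruct HZ as [<-|[]]; auto.
    - apply (repl_facts _ _ _ _ _ EF). intros w Hw. simpl. intros [_ s]. apply (Hw B); simpl; auto.
    - apply (repl_facts _ _ _ _ _ EF). unfold covF; simpl; right; right. apply covered_in, inIF.
      apply in_or_app; right; apply in_or_app; simpl; auto.
    - exists B. repeat split; auto. apply covered_in, inIF. apply in_or_app; right; apply in_or_app; simpl; auto.
    - apply (repl_facts _ _ _ _ _ EF). intros X E; discriminate. }
  destruct (classic (exists A B, In (Or A B) F /\ ~ (covF F A /\ covF F B))) as [[A [B [Hin nAB]]]|N3].
  { pose proof Hin as Hin'. apply in_split in Hin' as [F1 [F2 EF]].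
    pose proof (HFU _ Hin) as HU. apply CU in HU. destruct HU as [HUA HUB].
    assert (h : ~ provable (fill C (map IF (F1 ++ F2 ++ [A; B])))).
    { intro p1. apply Hnp. rewrite EF.
      eapply exch with (S' := map IF (F1 ++ F2) ++ [IF (Or A B)]); [rewrite !map_app; simpl; psolve|].
      rewrite at_end; apply r_or; rewrite <- at_end.
      eapply exch; [|exact p1]; rewrite !map_app; simpl; psolve. }
    apply (STEP _ h).
    - apply (repl_facts _ _ _ _ _ EF); auto. intros Z HZ. destruct HZ as [<-|[<-|[]]]; auto.
    - apply (repl_facts _ _ _ _ _ EF). intros w Hw. simpl. intros [s|s]; [apply (Hw A)|apply (Hw B)]; simpl; auto.
    - apply (repl_facts _ _ _ _ _ EF). unfold covF; simpl; right; split; apply covered_in, inIF;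
      apply in_or_app; right; apply in_or_app; simpl; auto.
    - apply not_and_or in nAB as [n|n]; [exists A|exists B]; repeat split; auto;
        apply covered_in, inIF; apply in_or_app; right; apply in_or_app; simpl; auto.
    - apply (repl_facts _ _ _ _ _ EF). intros X E; discriminate. }
  destruct (classic (exists p, In (Pos p) F /\ In (Neg p) F)) as [[p [h1 h2]]|N4].
  { exfalso. apply Hnp. apply in_split in h1 as [F1 [F2 EF]].
    assert (h3 : In (Neg p) (F1 ++ F2)).
    { rewrite EF in h2. apply in_app_or in h2 as [h|[h|h]]; [| discriminate|]; apply in_or_app; auto. }
    apply in_split in h3 as [G1 [G2 EG]].
    eapply exch with (S' := map IF ((G1 ++ G2) ++ [Neg p; Pos p])).
    - apply Permutation_map. rewrite EF. apply perm_trans with (Pos p :: F1 ++ F2); [psolve|].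
      rewrite EG. psolve.
    - rewrite map_app. simpl. rewrite at_end. apply r_id. }
  exists F. unfold Res1, Done1. split; [exact Hnp|]. split; [exact HFU|].
  split; [auto|]. split; [auto|]. split; [auto|]. split; [|split; [|split]].
  - intros X HX. apply NNPP. intro n. apply N1. eauto.
  - intros p h1 h2. apply N4. eauto.
  - intros A B HA. apply NNPP. intro n. apply N2. exists A, B. split; auto.
  - intros A B HA. apply NNPP. intro n. apply N3. exists A, B. auto.
Qed.

Definition R2 H F2 (D D' : sequent) :=
  Sat (H ++ diasF F2) D' /\ (forall w, FA w D' -> FA w D) /\ (forall X, covered X D -> covered X D').

Lemma phase2 C H F2 (Bs0 : list form)
  (HP : forall X, In X H -> Pdel C X)
  (CH : forall B, In B Bs0 -> forall C', (forall X, In X (H ++ diasF F2) -> Pdel C' X) ->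
        ~ provable (fill C' (leaf B)) ->
        exists D', ~ provable (fill C' D') /\ R2 H F2 (leaf B) D') :
  forall Bs Done, incl Bs Bs0 ->
  ~ provable (fill C (map IF F2 ++ map IB Done ++ map IB (map leaf Bs))) ->
  exists Ds, ~ provable (fill C (map IF F2 ++ map IB (Done ++ Ds))) /\
             Forall2 (R2 H F2) (map leaf Bs) Ds.
Proof.
  induction Bs as [|B Bs IHB]; intros Done Hi Hn.
  - exists []. simpl in *. rewrite !app_nil_r in *. split; auto.
  - set (Lc := map IF F2 ++ map IB Done ++ map IB (map leaf Bs)).
    assert (Hn' : ~ provable (fill (cplug C (Under Lc (Hole []))) (leaf B))).
    { rewrite <- in_br. intro Hp. apply Hn. eapply exch; [|exact Hp]. unfold Lc; simpl; psolve. }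
    assert (HPd : forall X, In X (H ++ diasF F2) -> Pdel (cplug C (Under Lc (Hole []))) X).
    { intros X HX D Hp. rewrite fill_cplug in *. simpl in *.
      apply in_app_or in HX as [HX|HX].
      - apply (HP X HX (Under Lc D)). exact Hp.
      - apply own_dia with (X := X); [|exact Hp].
        unfold Lc. apply in_or_app. left. apply inIF, diasF_in; auto. }
    destruct (CH B (Hi B (or_introl eq_refl)) _ HPd Hn') as [D' [d1 d2]].
    assert (Hn2 : ~ provable (fill C (map IF F2 ++ map IB (Done ++ [D']) ++ map IB (map leaf Bs)))).
    { rewrite <- in_br in d1. intro Hp. apply d1. eapply exch; [|exact Hp]. unfold Lc.
      rewrite map_app. simpl. psolve. }
    destruct (IHB (Done ++ [D'])) as [Ds [e1 e2]].
    + intros x hx. apply Hi; simpl; auto.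
    + exact Hn2.
    + exists (D' :: Ds). rewrite <- app_assoc in e1. simpl in e1. split; auto.
      simpl. constructor; auto.
Qed.

Definition cntB (L : list form) := cnt (fun B => In (neg B) L) (boxesOf U).

Lemma Proc : forall k F H C, length (boxesOf U) <= k + cntB (H ++ diasF F) -> incl F U -> incl H U ->
  (forall X, In X H -> Pdel C X) -> ~ provable (fill C (map IF F)) ->
  exists n', ~ provable (fill C n') /\ Sat H n' /\ (forall w, FA w n' -> FA w (map IF F)) /\
             (forall X, covered X (map IF F) -> covered X n').
Proof.
  intro k; induction k as [k IH] using (well_founded_induction lt_wf);
    intros F H C Hk HFU HHU HP Hnp.
  destruct (phase1a _ F H C eq_refl HFU HHU HP Hnp) as [F1 [r1 [r2 [r3 [r4 [r5 [d1 [d2 [d3 d4]]]]]]]]].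
  assert (NB : forall B, In (Box B) F1 -> ~ In (neg B) (H ++ diasF F1)).
  { intros B HB Hin. apply r1. apply (blocked C F1 B HB).
    apply in_app_or in Hin as [h|h]; [left; apply HP; auto| right; apply diasF_in; auto]. }
  set (F2 := nonbox F1). set (Bs := boxesOf F1).
  assert (Hnp2 : ~ provable (fill C (map IF F2 ++ map IB (map leaf Bs))))
    by (intro Hp; apply r1; apply (p1b_prov C F1 [] Hp)).
  assert (DF : forall X, In X (diasF F2) <-> In X (diasF F1)).
  { intro X. rewrite !diasF_in. unfold F2. rewrite in_nonbox. split; [tauto|].
    intro h; split; auto. intros B E; discriminate. }
  assert (F2U : incl F2 U) by (intros x hx; apply r2; apply in_nonbox in hx; tauto).
  assert (CH : forall B, In B Bs -> forall C', (forall X, In X (H ++ diasF F2) -> Pdel C' X) ->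
        ~ provable (fill C' (leaf B)) ->
        exists D', ~ provable (fill C' D') /\ R2 H F2 (leaf B) D').
  { intros B HB C' HP' Hn'. apply in_boxesOf in HB.
    pose proof (r2 _ HB) as HBU. pose proof (CU _ HBU) as [HB1 HB2].
    set (c0 := cntB (H ++ diasF F)). set (c1 := cntB (H ++ diasF F2)).
    set (c2 := cntB ((H ++ diasF F2) ++ diasF [Dia (neg B); B])).
    assert (L01 : c0 <= c1).
    { apply cnt_mono. intros x hx. apply in_app_or in hx as [hx|hx]; apply in_or_app; auto.
      right. apply DF. apply diasF_in. apply r5. apply diasF_in; auto. }
    assert (L12 : c1 < c2).
    { apply cnt_strict with B.
      - intros x hx; apply in_or_app; auto.
      - apply in_boxesOf; auto.
      - apply in_or_app; right. apply diasF_in; simpl; auto.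
      - intro h. apply (NB B HB). apply in_app_or in h as [h|h]; apply in_or_app; auto.
        right; apply DF; auto. }
    assert (L2 : c2 <= length (boxesOf U)) by apply cnt_le.
    destruct (IH (k - 1) ltac:(lia) [Dia (neg B); B] (H ++ diasF F2) C') as [n' [q1 [q2 [q3 q4]]]].
    - fold c2. lia.
    - intros x [<-|[<-|[]]]; auto.
    - intros x hx. apply in_app_or in hx as [hx|hx]; auto.
      apply diasF_in in hx. apply F2U in hx. apply (CU _ hx).
    - exact HP'.
    - exact Hn'.
    - exists n'. split; auto. split; auto. }
  destruct (phase2 C H F2 Bs HP CH Bs [] (incl_refl _) Hnp2) as [Ds [p1 p2]].
  assert (lift1 : forall X, covF F1 X -> covered X (map IF F2 ++ map IB (map leaf Bs))).
  { apply cov_lift.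
    - intros Y HY. apply inIF in HY. destruct (classic (exists B, Y = Box B)) as [[B ->]|nb].
      + simpl. right. exists (leaf B). split.
        * apply in_or_app; right. apply in_map_iff. exists (leaf B); split; auto.
          apply in_map_iff. exists B; split; auto. apply in_boxesOf; auto.
        * apply covered_in. unfold leaf; simpl; auto.
      + apply covered_in, inIF_app. apply in_nonbox. split; auto. intros B E; apply nb; eauto.
    - intros D HD. apply noIB in HD; contradiction. }
  assert (lift2 : forall X, covered X (map IF F2 ++ map IB (map leaf Bs)) -> covered X (map IF F2 ++ map IB Ds)).
  { apply cov_lift.
    - intros Y HY. apply covered_in. apply inIF_app. apply inIF_app in HY. auto.
    - intros D HD. apply inIB_app in HD. destruct (Forall2_l _ _ _ _ p2 HD) as [D' [h1 [_ [_ h2]]]].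
      exists D'. split; auto. apply inIB_app; auto. }
  exists (map IF F2 ++ map IB Ds). split; [exact p1|]. split; [|split].
  - constructor.
    + intros X HX. apply lift2, lift1, d1; auto.
    + intros p h1 h2. apply inIF_app in h1. apply inIF_app in h2.
      apply in_nonbox in h1. apply in_nonbox in h2. apply (d2 p); tauto.
    + intros A B h. apply inIF_app, in_nonbox in h as [h _]. destruct (d3 _ _ h); [left|right]; apply lift2, lift1; auto.
    + intros A B h. apply inIF_app, in_nonbox in h as [h _]. destruct (d4 _ _ h); split; apply lift2, lift1; auto.
    + intros B h. apply inIF_app, in_nonbox in h as [_ h]. exfalso; eapply h; eauto.
    + intros D h. apply inIB_app in h. destruct (Forall2_r _ _ _ _ p2 h) as [D0 [_ [h1 _]]].
      rewrite dias_app, dias_IB, app_nil_r. exact h1.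
  - intros w Hw. apply FA_flat. apply r3.
    assert (Hw1 : FA w (map IF F2 ++ map IB (map leaf Bs))).
    { revert Hw. apply FA_lift.
      - intros A hA. apply inIF_app in hA. apply inIF_app; auto.
      - intros D hD. apply inIB_app in hD. destruct (Forall2_l _ _ _ _ p2 hD) as [D' [h1 [_ [h2 _]]]].
        exists D'. split; auto. apply inIB_app; auto. }
    intros A hA. destruct (classic (exists B, A = Box B)) as [[B ->]|nb].
    + inversion Hw1 as [? ? _ Hc]; subst.
      assert (hB : In (IB (leaf B)) (map IF F2 ++ map IB (map leaf Bs))).
      { apply inIB_app. apply in_map_iff. exists B; split; auto. apply in_boxesOf; auto. }
      destruct (Hc _ hB) as [v [Hv Hf]]. inversion Hf as [? ? Hf1 _]; subst.
      intro Hs. apply (Hf1 B); [unfold leaf; simpl; auto|]. apply Hs; auto.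
    + inversion Hw1 as [? ? Hf _]; subst. apply Hf. apply inIF_app. apply in_nonbox.
      split; auto. intros B E; apply nb; eauto.
  - intros X HX. apply lift2, lift1, r4; auto.
Qed.

End Search.

Fixpoint sub (A : form) : list form :=
  A :: match A with
       | And B C | Or B C => sub B ++ sub C
       | Box B | Dia B => sub B
       | _ => []
       end.

Lemma sub_refl A : In A (sub A).
Proof. destruct A; simpl; auto. Qed.
Lemma sub_trans A : forall X, In X (sub A) -> forall Y, In Y (sub X) -> In Y (sub A).
Proof.
  induction A; simpl; intros X [<-|HX] Y HY; auto; try contradiction; right.
  - apply in_app_or in HX as [HX|HX]; apply in_or_app; [left; eapply IHA1|right; eapply IHA2]; eauto.
  - apply in_app_or in HX as [HX|HX]; apply in_or_app; [left; eapply IHA1|right; eapply IHA2]; eauto.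
  - eapply IHA; eauto.
  - eapply IHA; eauto.
Qed.

Lemma closed_sub A0 : Closed (sub A0 ++ map neg (sub A0)).
Proof.
  set (U := sub A0 ++ map neg (sub A0)).
  assert (Hs : forall X, In X (sub A0) -> forall Y, In Y (sub X) -> In Y U /\ In (neg Y) U).
  { intros X HX Y HY. pose proof (sub_trans _ _ HX _ HY). split; apply in_or_app; [left; auto|right].
    apply in_map; auto. }
  intros X HX. apply in_app_or in HX as [HX|HX].
  - pose proof (Hs _ HX) as S. destruct X; simpl; auto.
    + split; apply S; simpl; right; apply in_or_app; [left|right]; apply sub_refl.
    + split; apply S; simpl; right; apply in_or_app; [left|right]; apply sub_refl.
    + split; [apply S; simpl; right; apply sub_refl|]. apply (S (Box X)); simpl; auto.
    + apply S; simpl; right; apply sub_refl.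
  - apply in_map_iff in HX as [Z [<- HZ]]. pose proof (Hs _ HZ) as S. destruct Z; simpl; auto.
    + split; apply S; simpl; right; apply in_or_app; [left|right]; apply sub_refl.
    + split; apply S; simpl; right; apply in_or_app; [left|right]; apply sub_refl.
    + apply S; simpl; right; apply sub_refl.
    + split; [apply S; simpl; right; apply sub_refl|]. rewrite neg_inv. apply (S (Dia Z)); simpl; auto.
Qed.

Theorem complete A : GLthm (tr A) -> provable [IF A].
Proof.
  intro HG. apply NNPP. intro Hn.
  set (U := sub A ++ map neg (sub A)).
  destruct (Proc U (closed_sub A) (length (boxesOf U)) [A] [] (Hole [])) as [n' [_ [HS [HF _]]]].
  - lia.
  - intros x [<-|[]]. apply in_or_app; left; apply sub_refl.
  - intros x [].
  - intros x [].
  - exact Hn.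
  - pose proof (HF n' (Sat_FA _ _ HS)) as H1. inversion H1 as [? ? H2 _]; subst.
    apply (H2 A); simpl; auto. apply GL_sound; auto.
Qed.

Theorem mainTheorem1 : forall A : form, GLthm (tr A) <-> provable [IF A].
Proof.
  intro A. split; [apply complete| apply sound1].
Qed.
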